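(* Let $G$ be an amenable group and let $A,B\subseteq G$ have positive Banach densities $d(A)=\alpha$ and $d(B)=\beta$. Then the product set $AB$ is piecewise $k$-syndetic with $k=\left\lfloor\frac{1}{\alpha\beta}\right\rfloor$; that is, there is $F\subseteq G$ with $|F|\le\frac1{\alpha\beta}$ such that $FAB$ is thick.
   Context: A finite $K\subseteq G$ is $(H,\varepsilon)$-invariant if $K\ne\emptyset$ and $|hK\triangle K|/|K|<\varepsilon$ for all $h\in H$; $G$ is amenable if such $K$ exist for every finite $H\subseteq G$ and $\varepsilon>0$. $d(A)$ is the supremum of all $\alpha$ such that for every finite $H$ and $\varepsilon>0$ there is an $(H,\varepsilon)$-invariant $K$ with $|A\cap K|/|K|\ge\alpha$. A set $T\subseteq G$ is thick if for every finite $H\subseteq G$ there is $x\in G$ with $Hx\subseteq T$. $S$ is piecewise $k$-syndetic if $FS$ is thick for some $F\subseteq G$ with $|F|\le k$. *)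

(* Defs.v *)
(* abstract (possibly infinite) group given by explicit operations;
   finite subsets are duplicate-free lists; densities are Stdlib reals. *)
From Stdlib Require Import Reals List.
Import ListNotations.
Open Scope R_scope.

Section Defs.
Context {G : Type} (mul : G -> G -> G) (one : G) (inv : G -> G).

Definition is_group : Prop :=
  (forall x y z, mul x (mul y z) = mul (mul x y) z) /\
  (forall x, mul one x = x) /\ (forall x, mul x one = x) /\
  (forall x, mul (inv x) x = one) /\ (forall x, mul x (inv x) = one).

Definition card_of (P : G -> Prop) (n : nat) : Prop :=
  exists l : list G, NoDup l /\ (forall x, In x l <-> P x) /\ length l = n.

Definition in_left_translate (h : G) (K : list G) (x : G) : Prop :=
  exists y, In y K /\ x = mul h y.

Definition invariant (H : list G) (eps : R) (K : list G) : Prop :=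
  K <> [] /\ NoDup K /\
  forall h, In h H -> exists n,
    card_of (fun x => (in_left_translate h K x /\ ~ In x K) \/
                      (In x K /\ ~ in_left_translate h K x)) n /\
    INR n / INR (length K) < eps.

Definition amenable : Prop :=
  forall (H : list G) (eps : R), 0 < eps -> exists K, invariant H eps K.

Definition density_witness (A : G -> Prop) (alpha : R) : Prop :=
  forall (H : list G) (eps : R), 0 < eps -> exists K, invariant H eps K /\
    exists n, card_of (fun x => A x /\ In x K) n /\ INR n / INR (length K) >= alpha.

Definition banach_density (A : G -> Prop) (alpha : R) : Prop :=
  is_lub (density_witness A) alpha.

Definition thick (T : G -> Prop) : Prop :=
  forall H : list G, exists x, forall h, In h H -> T (mul h x).

Definition left_prod (F : list G) (S : G -> Prop) (g : G) : Prop :=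
  exists f s, In f F /\ S s /\ g = mul f s.

Definition set_prod (A B : G -> Prop) (g : G) : Prop :=
  exists a b, A a /\ B b /\ g = mul a b.

Definition piecewise_syndetic (k : nat) (S : G -> Prop) : Prop :=
  exists F : list G, NoDup F /\ (length F <= k)%nat /\ thick (left_prod F S).

End Defs.

(* Main.v *)
Require Import Defs.
From Stdlib Require Import Reals List Lra Lia Psatz ClassicalEpsilon Classical.
Import ListNotations.
Open Scope R_scope.


Definition dec (P : Prop) : bool := if excluded_middle_informative P then true else false.
Lemma decT (P : Prop) : dec P = true <-> P.
Proof. unfold dec; destruct (excluded_middle_informative P) as [h|h]; split; intro; auto; try discriminate; contradiction. Qed.
Lemma decF (P : Prop) : dec P = false <-> ~ P.
Proof. unfold dec; destruct (excluded_middle_informative P) as [h|h]; split; intro; auto; try discriminate; contradiction. Qed.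

Definition cnt {G : Type} (P : G -> Prop) (l : list G) : nat :=
  length (filter (fun x => dec (P x)) l).

Lemma cnt_cons {G : Type} (P : G -> Prop) x l :
  cnt P (x :: l) = ((if dec (P x) then 1 else 0) + cnt P l)%nat.
Proof. unfold cnt; simpl; destruct (dec (P x)); reflexivity. Qed.

Lemma cnt_le {G : Type} (P : G -> Prop) l : (cnt P l <= length l)%nat.
Proof. induction l; [unfold cnt; simpl; lia|]. rewrite cnt_cons; simpl; destruct (dec (P a)); lia. Qed.

Lemma cnt_mono {G : Type} (P Q : G -> Prop) l :
  (forall x, In x l -> P x -> Q x) -> (cnt P l <= cnt Q l)%nat.
Proof.
  induction l as [|a l IH]; intro H; [unfold cnt; simpl; lia|].
  rewrite !cnt_cons.
  assert (IH' : (cnt P l <= cnt Q l)%nat) by (apply IH; intros; apply H; simpl; auto).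
  destruct (dec (P a)) eqn:E1; destruct (dec (Q a)) eqn:E2; try lia.
  apply (proj1 (decT _)) in E1. apply (proj1 (decF _)) in E2. exfalso; apply E2. apply H; [left; reflexivity|exact E1].
Qed.

Lemma cnt_split {G : Type} (P Q : G -> Prop) l :
  (cnt P l <= cnt (fun x => P x /\ Q x) l + cnt (fun x => ~ Q x) l)%nat.
Proof.
  induction l as [|a l IH]; [unfold cnt; simpl; lia|].
  rewrite !cnt_cons.
  destruct (dec (P a)) eqn:E1; [|lia].
  apply (proj1 (decT _)) in E1.
  destruct (classic (Q a)) as [hq|hq].
  - assert (E: dec (P a /\ Q a) = true) by (apply (proj2 (decT _)); auto). rewrite E. lia.
  - assert (E: dec (~ Q a) = true) by (apply (proj2 (decT _)); auto). rewrite E.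
    destruct (dec (P a /\ Q a)); lia.
Qed.

Lemma cnt_zero {G : Type} (P : G -> Prop) l : (forall x, In x l -> ~ P x) -> cnt P l = 0%nat.
Proof.
  induction l as [|a l IH]; intro H; [reflexivity|].
  rewrite cnt_cons. assert (E: dec (P a) = false) by (apply (proj2 (decF _)); apply H; simpl; auto).
  rewrite E, IH; auto. intros; apply H; simpl; auto.
Qed.

Lemma cnt_pos {G : Type} (P : G -> Prop) l : (0 < cnt P l)%nat -> exists x, In x l /\ P x.
Proof.
  intro H. apply NNPP; intro Hn. rewrite cnt_zero in H; [lia|].
  intros x Hx HP; apply Hn; eauto.
Qed.

Lemma card_le_cnt {G : Type} (P Q : G -> Prop) (K : list G) n :
  card_of P n -> NoDup K -> (forall x, In x K -> Q x -> P x) -> (cnt Q K <= n)%nat.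
Proof.
  intros [l [Hnd [Hiff Hlen]]] HK H. subst n. unfold cnt.
  apply NoDup_incl_length. apply NoDup_filter; auto.
  intros y Hy. apply filter_In in Hy. destruct Hy as [Hy1 Hy2].
  apply (proj1 (decT _)) in Hy2. apply Hiff. auto.
Qed.

Lemma card_ge_cnt {G : Type} (P Q : G -> Prop) (K : list G) n :
  card_of P n -> (forall x, P x -> In x K /\ Q x) -> (n <= cnt Q K)%nat.
Proof.
  intros [l [Hnd [Hiff Hlen]]] H. subst n. unfold cnt.
  apply NoDup_incl_length; auto.
  intros y Hy. apply filter_In. apply Hiff in Hy. destruct (H y Hy). split; auto. apply (proj2 (decT _)); auto.
Qed.

Lemma cnt_inj {G : Type} (P Q : G -> Prop) (l l' : list G) (phi : G -> G) :
  NoDup l -> (forall x y, phi x = phi y -> x = y) ->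
  (forall x, In x l -> P x -> In (phi x) l' /\ Q (phi x)) -> (cnt P l <= cnt Q l')%nat.
Proof.
  intros Hnd Hinj H. unfold cnt.
  rewrite <- (length_map phi).
  apply NoDup_incl_length.
  - apply NoDup_map_NoDup_ForallPairs; [intros a b _ _; apply Hinj|]. apply NoDup_filter; auto.
  - intros y Hy. apply in_map_iff in Hy. destruct Hy as [z [<- Hz]].
    apply filter_In in Hz. destruct Hz as [Hz1 Hz2]. apply (proj1 (decT _)) in Hz2.
    destruct (H z Hz1 Hz2). apply filter_In. split; auto. apply (proj2 (decT _)); auto.
Qed.

Fixpoint lsum {G : Type} (l : list G) (v : G -> nat) : nat :=
  match l with [] => 0%nat | x :: t => (v x + lsum t v)%nat end.

Lemma lsum_ext {G : Type} (l : list G) u v : (forall x, In x l -> u x = v x) -> lsum l u = lsum l v.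
Proof. induction l as [|a l IH]; intro H; simpl; auto. f_equal; [apply H; simpl; auto|apply IH; intros; apply H; simpl; auto]. Qed.

Lemma lsum_plus {G : Type} (l : list G) u v : lsum l (fun a => u a + v a)%nat = (lsum l u + lsum l v)%nat.
Proof. induction l; simpl; auto. rewrite IHl; lia. Qed.

Lemma cnt_lsum {G : Type} (P : G -> Prop) l : cnt P l = lsum l (fun x => if dec (P x) then 1%nat else 0%nat).
Proof. induction l; simpl; auto. rewrite cnt_cons, IHl; reflexivity. Qed.

Lemma lsum_swap {G : Type} (l1 l2 : list G) (w : G -> G -> nat) :
  lsum l1 (fun a => lsum l2 (fun b => w a b)) = lsum l2 (fun b => lsum l1 (fun a => w a b)).
Proof.
  induction l1 as [|a l1 IH]; simpl.
  - induction l2; simpl; auto.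
  - rewrite IH. rewrite lsum_plus. reflexivity.
Qed.

Lemma cnt_swap {G : Type} (R0 : G -> G -> Prop) (l1 l2 : list G) :
  lsum l1 (fun a => cnt (R0 a) l2) = lsum l2 (fun b => cnt (fun a => R0 a b) l1).
Proof.
  rewrite (lsum_ext l1 _ (fun a => lsum l2 (fun b => if dec (R0 a b) then 1%nat else 0%nat))).
  2:{ intros; apply cnt_lsum. }
  rewrite lsum_swap. apply lsum_ext. intros; symmetry; apply cnt_lsum.
Qed.

Lemma lsum_lower_R {G : Type} (l : list G) (v : G -> nat) (P : G -> Prop) (c : R) :
  0 <= c -> (forall x, In x l -> P x -> c <= INR (v x)) -> INR (cnt P l) * c <= INR (lsum l v).
Proof.
  intros Hc. induction l as [|a l IH]; intro H; simpl.
  - unfold cnt; simpl; lra.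
  - rewrite cnt_cons, !plus_INR.
    assert (IH' : INR (cnt P l) * c <= INR (lsum l v)) by (apply IH; intros; apply H; simpl; auto).
    destruct (dec (P a)) eqn:E.
    + apply (proj1 (decT _)) in E. assert (c <= INR (v a)) by (apply H; simpl; auto). simpl INR. lra.
    + pose proof (pos_INR (v a)). simpl INR. lra.
Qed.

Lemma lsum_upper_lt {G : Type} (l : list G) (v : G -> nat) (c : R) :
  l <> [] -> (forall x, In x l -> INR (v x) < c) -> INR (lsum l v) < INR (length l) * c.
Proof.
  intros Hne H.
  assert (Hle : forall l', (forall x, In x l' -> INR (v x) < c) -> INR (lsum l' v) <= INR (length l') * c).
  { induction l' as [|a l' IH]; intro H'; cbn [lsum length]; [simpl; lra|].
    rewrite plus_INR, S_INR.
    assert (INR (v a) < c) by (apply H'; simpl; auto).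
    assert (INR (lsum l' v) <= INR (length l') * c) by (apply IH; intros; apply H'; simpl; auto). lra. }
  destruct l as [|a l]; [contradiction|]. cbn [lsum length]. rewrite plus_INR, S_INR.
  assert (INR (v a) < c) by (apply H; simpl; auto).
  assert (INR (lsum l v) <= INR (length l) * c) by (apply Hle; intros; apply H; simpl; auto). lra.
Qed.

Lemma lsum_upper_nat {G : Type} (l : list G) (v : G -> nat) :
  (forall x, In x l -> (v x <= 1)%nat) -> (lsum l v <= length l)%nat.
Proof. induction l; intro H; simpl; auto. assert (v a <= 1)%nat by (apply H; simpl; auto).
  assert (lsum l v <= length l)%nat by (apply IHl; intros; apply H; simpl; auto). lia. Qed.

Lemma lsum_lower_all {G : Type} (l : list G) (v : G -> nat) (c : R) :
  (forall x, In x l -> c <= INR (v x)) -> INR (length l) * c <= INR (lsum l v).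
Proof.
  induction l as [|a l IH]; intro H; cbn [lsum length]; [simpl; lra|].
  rewrite plus_INR, S_INR.
  assert (c <= INR (v a)) by (apply H; simpl; auto).
  assert (INR (length l) * c <= INR (lsum l v)) by (apply IH; intros; apply H; simpl; auto). lra.
Qed.

Lemma cnt_le1 {G : Type} (P : G -> Prop) (l : list G) :
  NoDup l -> (forall f f', In f l -> In f' l -> f <> f' -> P f -> P f' -> False) -> (cnt P l <= 1)%nat.
Proof.
  induction l as [|a l IH]; intros Hnd H; [unfold cnt; simpl; lia|].
  inversion Hnd; subst. rewrite cnt_cons.
  destruct (dec (P a)) eqn:E.
  - apply (proj1 (decT _)) in E. rewrite cnt_zero; [lia|].
    intros x Hx HPx. apply (H a x); simpl; auto. intro; subst; contradiction.
  - assert (cnt P l <= 1)%nat by (apply IH; auto; intros; apply (H f f'); simpl; auto). lia.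
Qed.

Lemma g_c1 {G} (mul : G -> G -> G) one inv : is_group mul one inv ->
  forall a z, mul (inv a) (mul a z) = z.
Proof. intros [as_ [l1 [r1 [li ri]]]] a z. rewrite as_, li, l1; auto. Qed.
Lemma g_c2 {G} (mul : G -> G -> G) one inv : is_group mul one inv ->
  forall a w, mul a (mul (inv a) w) = w.
Proof. intros [as_ [l1 [r1 [li ri]]]] a z. rewrite as_, ri, l1; auto. Qed.
Lemma g_inj {G} (mul : G -> G -> G) one inv : is_group mul one inv ->
  forall f y y', mul f y = mul f y' -> y = y'.
Proof. intros Hg f y y' E. rewrite <- (g_c1 mul one inv Hg f y), <- (g_c1 mul one inv Hg f y'), E; auto. Qed.
Lemma g_dec {G} (mul : G -> G -> G) one inv : is_group mul one inv ->
  forall g y x, mul (mul g y) (mul (inv y) x) = mul g x.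
Proof. intros Hg g y x. destruct Hg as [as_ [l1 [r1 [li ri]]]].
  rewrite <- as_. f_equal. rewrite as_, ri, l1; auto. Qed.

Lemma invariant_mono {G} (mul : G -> G -> G) H H' e e' K :
  invariant mul H e K -> incl H' H -> e <= e' -> invariant mul H' e' K.
Proof.
  intros [Hne [Hnd Hh]] Hi He. split; [|split]; auto.
  intros h Hh'. destruct (Hh h (Hi h Hh')) as [n [Hc Hl]]. exists n; split; auto. lra.
Qed.

Lemma inv_len_pos {G} (mul : G -> G -> G) H e K : invariant mul H e K -> 0 < INR (length K).
Proof. intros [Hne _]. destruct K; [contradiction|]. apply lt_0_INR. simpl; lia. Qed.

Lemma inv_bad {G} (mul : G -> G -> G) H e K h : invariant mul H e K -> In h H ->
  INR (cnt (fun z => ~ in_left_translate mul h K z) K) < e * INR (length K).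
Proof.
  intros Hinv Hh. pose proof (inv_len_pos _ _ _ _ Hinv) as Hp.
  destruct Hinv as [Hne [Hnd Hi]]. destruct (Hi h Hh) as [n [Hc Hl]].
  assert (Hle : (cnt (fun z => ~ in_left_translate mul h K z) K <= n)%nat).
  { eapply card_le_cnt; eauto. intros x Hx Hnx. right; auto. }
  apply le_INR in Hle. unfold Rdiv in Hl.
  apply (Rmult_lt_compat_r (INR (length K))) in Hl; auto.
  rewrite Rmult_assoc, Rinv_l in Hl; lra.
Qed.

Lemma lub_witness (E : R -> Prop) m d : is_lub E m -> 0 < d -> exists w, E w /\ m - d < w.
Proof.
  intros [Hub Hl] Hd. apply NNPP; intro Hn.
  assert (is_upper_bound E (m - d)).
  { intros w Hw. destruct (Rle_or_lt w (m - d)); auto. exfalso; apply Hn; eauto. }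
  specialize (Hl _ H). lra.
Qed.

Lemma dens_get {G} (mul : G -> G -> G) (A : G -> Prop) alpha :
  banach_density mul A alpha -> forall H d, 0 < d ->
  exists K, invariant mul H d K /\ (alpha - d) * INR (length K) <= INR (cnt A K).
Proof.
  intros Hb H d Hd. destruct (lub_witness _ _ _ Hb Hd) as [w [Hw Hlt]].
  destruct (Hw H d Hd) as [K [Hinv [n [Hc Hr]]]].
  exists K; split; auto. pose proof (inv_len_pos _ _ _ _ Hinv) as Hp.
  assert (Hle : (n <= cnt A K)%nat).
  { eapply card_ge_cnt; eauto. intros x [Ha Hx]; auto. }
  apply le_INR in Hle.
  assert (w * INR (length K) <= INR n).
  { unfold Rdiv in Hr. apply Rge_le in Hr.
    apply (Rmult_le_compat_r (INR (length K))) in Hr; [|lra].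
    rewrite Rmult_assoc, Rinv_l in Hr; lra. }
  nra.
Qed.

Lemma dens_le1 {G} (mul : G -> G -> G) (A : G -> Prop) alpha :
  banach_density mul A alpha -> alpha <= 1.
Proof.
  intros Hb. destruct (Rle_or_lt alpha 1); auto.
  destruct (dens_get _ _ _ Hb [] ((alpha - 1)/2)) as [K [Hinv Hc]]; [lra|].
  pose proof (inv_len_pos _ _ _ _ Hinv). pose proof (cnt_le A K) as Hl. apply le_INR in Hl. nra.
Qed.

Definition Yx {G} (mul : G -> G -> G) (inv : G -> G) (A B : G -> Prop) (x y : G) : Prop :=
  A y /\ B (mul (inv y) x).
Definition Sf {G} (mul : G -> G -> G) (inv : G -> G) (A B : G -> Prop) (f x w : G) : Prop :=
  exists y, Yx mul inv A B x y /\ w = mul f y.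
Definition disj {G} (mul : G -> G -> G) (inv : G -> G) (A B : G -> Prop) (F Om : list G) (x : G) : Prop :=
  forall f f' w, In f F -> In f' F -> f <> f' -> In w Om ->
    Sf mul inv A B f x w -> Sf mul inv A B f' x w -> False.
Definition good {G} (mul : G -> G -> G) (inv : G -> G) (A B : G -> Prop) (ab : R)
  (F H : list G) (e : R) (Om : list G) (x : G) : Prop :=
  invariant mul H e Om /\ (ab - e) * INR (length Om) <= INR (cnt (Yx mul inv A B x) Om) /\
  disj mul inv A B F Om x.
Definition Dp {G} (mul : G -> G -> G) (inv : G -> G) (A B : G -> Prop) (ab : R) (F : list G) : Prop :=
  forall H e, 0 < e -> exists Om x, good mul inv A B ab F H e Om x.

Lemma D_nil {G} (mul : G -> G -> G) one inv (Hg : is_group mul one inv) (A B : G -> Prop) alpha beta :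
  0 < alpha -> 0 < beta -> banach_density mul A alpha -> banach_density mul B beta ->
  Dp mul inv A B (alpha * beta) [].
Proof.
  intros Ha Hb HdA HdB H e He.
  pose proof (dens_le1 _ _ _ HdA) as Ha1. pose proof (dens_le1 _ _ _ HdB) as Hb1.
  set (d := Rmin (e/3) (Rmin (alpha/2) (beta/4))).
  assert (Hd0 : 0 < d) by (unfold d; repeat apply Rmin_glb_lt; lra).
  assert (Hd1 : d <= e/3) by apply Rmin_l.
  assert (Hd2 : d <= alpha/2) by (eapply Rle_trans; [apply Rmin_r|apply Rmin_l]).
  assert (Hd3 : d <= beta/4) by (eapply Rle_trans; [apply Rmin_r|apply Rmin_r]).
  destruct (dens_get _ _ _ HdA H d Hd0) as [K [HK HcK]].
  destruct (dens_get _ _ _ HdB (map inv K) d Hd0) as [M [HM HcM]].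
  pose proof (inv_len_pos _ _ _ _ HK) as HNK. pose proof (inv_len_pos _ _ _ _ HM) as HNM.
  assert (HMnd : NoDup M) by (destruct HM as [_ [X _]]; exact X).
  assert (Hper : forall a, In a K -> A a ->
     (beta - 2 * d) * INR (length M) <= INR (cnt (fun x => Yx mul inv A B x a) M)).
  { intros a Ha_in HAa.
    assert (H1 : (cnt (fun z => B z /\ In (mul a z) M) M <= cnt (fun x => Yx mul inv A B x a) M)%nat).
    { apply (cnt_inj _ _ _ _ (mul a)); auto.
      - intros; eapply g_inj; eauto.
      - intros z Hz [HBz Hin]. split; auto. split; auto. rewrite (g_c1 _ _ _ Hg); auto. }
    pose proof (cnt_split B (fun z => In (mul a z) M) M) as H2.
    assert (H3 : (cnt (fun z => ~ In (mul a z) M) M <= cnt (fun z => ~ in_left_translate mul (inv a) M z) M)%nat).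
    { apply cnt_mono. intros z _ Hn Hl. apply Hn. destruct Hl as [w [Hw ->]].
      rewrite (g_c2 _ _ _ Hg); auto. }
    pose proof (inv_bad _ _ _ _ (inv a) HM (in_map _ _ _ Ha_in)) as H4.
    apply le_INR in H1. apply le_INR in H2. apply le_INR in H3. rewrite plus_INR in H2. lra. }
  set (c := (alpha - d) * (beta - 2 * d) * INR (length K)).
  assert (Hex : exists x, In x M /\ c <= INR (cnt (Yx mul inv A B x) K)).
  { apply NNPP; intro Hn.
    assert (Hlt : INR (lsum M (fun x => cnt (Yx mul inv A B x) K)) < INR (length M) * c).
    { apply lsum_upper_lt. destruct HM as [X _]; exact X.
      intros x Hx. destruct (Rlt_or_le (INR (cnt (Yx mul inv A B x) K)) c); auto.
      exfalso; apply Hn; eauto. }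
    rewrite (cnt_swap (Yx mul inv A B) M K) in Hlt.
    assert (Hge : INR (cnt A K) * ((beta - 2 * d) * INR (length M)) <=
                  INR (lsum K (fun b => cnt (fun a => Yx mul inv A B a b) M))).
    { apply lsum_lower_R; [nra|]. intros; apply Hper; auto. }
    assert (Hb2 : 0 <= (beta - 2 * d) * INR (length M)) by nra.
    assert (INR (length M) * c <= INR (cnt A K) * ((beta - 2 * d) * INR (length M))).
    { unfold c. assert (0 <= alpha - d) by lra. nra. }
    lra. }
  destruct Hex as [x [_ Hx]]. exists K, x. split; [|split].
  - eapply invariant_mono; eauto. apply incl_refl. lra.
  - eapply Rle_trans; [|exact Hx]. unfold c.
    apply Rmult_le_compat_r; [lra|]. nra.
  - intros f f' w Hf. destruct Hf.
Qed.

Lemma pack {G} (mul : G -> G -> G) one inv (Hg : is_group mul one inv) (A B : G -> Prop) ab (F : list G) :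
  0 < ab -> NoDup F -> Dp mul inv A B ab F -> INR (length F) * ab <= 1.
Proof.
  intros Hab Hnd HD. destruct (Rle_or_lt (INR (length F) * ab) 1) as [|Hgt]; auto. exfalso.
  assert (Hm : 0 < INR (length F)).
  { pose proof (pos_INR (length F)) as H0. destruct (Rle_lt_or_eq_dec 0 _ H0) as [|E]; auto. rewrite <- E in Hgt; lra. }
  set (m := INR (length F)) in *.
  set (e := (m * ab - 1) / (4 * m)).
  assert (He : 0 < e) by (unfold e; apply Rdiv_lt_0_compat; lra).
  assert (Hme : m * e = (m * ab - 1) / 4) by (unfold e; field; lra).
  destruct (HD (map inv F) e He) as [Om [x [HOm [Hden Hdisj]]]].
  pose proof (inv_len_pos _ _ _ _ HOm) as HN.
  assert (HOnd : NoDup Om) by (destruct HOm as [_ [X _]]; exact X).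
  assert (Hper : forall f, In f F -> (ab - 2 * e) * INR (length Om) <= INR (cnt (Sf mul inv A B f x) Om)).
  { intros f Hf.
    assert (H1 : (cnt (fun y => Yx mul inv A B x y /\ In (mul f y) Om) Om <= cnt (Sf mul inv A B f x) Om)%nat).
    { apply (cnt_inj _ _ _ _ (mul f)); auto.
      - intros; eapply g_inj; eauto.
      - intros y Hy [HY Hin]. split; auto. exists y; split; auto. }
    pose proof (cnt_split (Yx mul inv A B x) (fun y => In (mul f y) Om) Om) as H2.
    assert (H3 : (cnt (fun y => ~ In (mul f y) Om) Om <= cnt (fun z => ~ in_left_translate mul (inv f) Om z) Om)%nat).
    { apply cnt_mono. intros z _ Hn Hl. apply Hn. destruct Hl as [w [Hw ->]].
      rewrite (g_c2 _ _ _ Hg); auto. }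
    pose proof (inv_bad _ _ _ _ (inv f) HOm (in_map _ _ _ Hf)) as H4.
    apply le_INR in H1. apply le_INR in H2. apply le_INR in H3. rewrite plus_INR in H2. lra. }
  assert (Hlow : INR (length F) * ((ab - 2 * e) * INR (length Om)) <= INR (lsum F (fun f => cnt (fun w => Sf mul inv A B f x w) Om))).
  { apply lsum_lower_all. auto. }
  rewrite (cnt_swap (fun f w => Sf mul inv A B f x w) F Om) in Hlow.
  assert (Hup : (lsum Om (fun w => cnt (fun f => Sf mul inv A B f x w) F) <= length Om)%nat).
  { apply lsum_upper_nat. intros w Hw. apply cnt_le1; auto.
    intros f f' Hf Hf' Hne H1 H2. eapply Hdisj; eauto. }
  apply le_INR in Hup. fold m in Hlow.
  assert (m * (ab - 2 * e) <= 1).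
  { apply (Rmult_le_reg_r (INR (length Om))); auto. nra. }
  nra.
Qed.

Lemma to_floor (m : nat) (r : R) : INR m <= r -> (m <= Z.to_nat (Int_part r))%nat.
Proof.
  intros H. unfold Int_part. destruct (archimed r) as [H1 _].
  assert (IZR (Z.of_nat m) < IZR (up r)) by (rewrite <- INR_IZR_INZ; lra).
  apply lt_IZR in H0. lia.
Qed.

Lemma max_exists (P : nat -> Prop) (Bd : nat) :
  P 0%nat -> (forall n, P n -> (n <= Bd)%nat) -> exists n, P n /\ forall k, P k -> (k <= n)%nat.
Proof.
  revert P. induction Bd as [|Bd IH]; intros P H0 Hb.
  - exists 0%nat; split; auto.
  - destruct (classic (P (S Bd))) as [HS|HS].
    + exists (S Bd); split; auto.
    + apply IH; auto. intros n Hn. specialize (Hb n Hn).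
      destruct (Nat.eq_dec n (S Bd)); [subst; contradiction|lia].
Qed.

Lemma thickL {G} (mul : G -> G -> G) one inv (Hg : is_group mul one inv) (A B : G -> Prop) ab (F : list G) :
  0 < ab -> (forall g, ~ In g F -> ~ Dp mul inv A B ab (g :: F)) ->
  forall H : list G, exists Hs e, 0 < e /\ e < ab /\ forall Om x, good mul inv A B ab F Hs e Om x ->
    forall h, In h H -> left_prod mul F (set_prod mul A B) (mul h x).
Proof.
  intros Hab Hmax H. induction H as [|g H IH].
  - exists [], (ab / 2). split; [lra|split; [lra|]]. intros Om x _ h [].
  - destruct IH as [Hs [e [He [Heab IH]]]].
    assert (Hx : forall Om x, good mul inv A B ab F Hs e Om x -> exists y, Yx mul inv A B x y).
    { intros Om x [HOm [Hden _]]. pose proof (inv_len_pos _ _ _ _ HOm).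
      assert (0 < INR (cnt (Yx mul inv A B x) Om)) by nra.
      destruct (cnt_pos (Yx mul inv A B x) Om) as [y [_ Hy]]; eauto.
      apply INR_lt. simpl. lra. }
    destruct (classic (In g F)) as [HgF|HgF].
    + exists Hs, e. split; [lra|split; [lra|]]. intros Om x Hgood h [Eh|Hh]; [subst h|apply IH with Om; auto].
      destruct (Hx Om x Hgood) as [y [Hay Hby]].
      exists g, x. split; [auto|split; auto]. exists y, (mul (inv y) x). split; auto. split; auto.
      rewrite (g_c2 _ _ _ Hg). auto.
    + assert (Hbad : exists Hg0 eg, 0 < eg /\ forall Om x, ~ good mul inv A B ab (g :: F) Hg0 eg Om x).
      { apply NNPP; intro Hn. apply (Hmax g HgF). intros Hg0 eg Heg. apply NNPP; intro Hn2.
        apply Hn. exists Hg0, eg. split; auto. intros Om x Hgood. apply Hn2; eauto. }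
      destruct Hbad as [Hg0 [eg [Heg Hbad]]].
      exists (Hg0 ++ Hs), (Rmin eg e).
      assert (Hm1 : Rmin eg e <= eg) by apply Rmin_l. assert (Hm2 : Rmin eg e <= e) by apply Rmin_r.
      split; [apply Rmin_glb_lt; lra|split; [lra|]].
      intros Om x [HOm [Hden Hdisj]].
      assert (Hgood : good mul inv A B ab F Hs e Om x).
      { split; [|split]; auto.
        - eapply invariant_mono; eauto. intros z Hz; apply in_or_app; auto.
        - pose proof (inv_len_pos _ _ _ _ HOm). nra. }
      intros h [Eh|Hh]; [subst h|apply IH with Om; auto].
      apply NNPP; intro Hnot. apply (Hbad Om x). split; [|split].
      * eapply invariant_mono; eauto. intros z Hz; apply in_or_app; auto.
      * pose proof (inv_len_pos _ _ _ _ HOm). nra.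
      * intros f f' w Hf Hf' Hne Hw [y [[Hay Hby] Ew]] [y' [[Hay' Hby'] Ew']].
        destruct Hf as [Ef|Hf]; destruct Hf' as [Ef'|Hf'].
        -- subst; contradiction.
        -- subst f. apply Hnot. exists f', (mul y' (mul (inv y) x)). split; auto. split.
           ++ exists y', (mul (inv y) x); auto.
           ++ pose proof Hg as Hg'. destruct Hg' as [as_ _]. rewrite as_, <- Ew', Ew, <- as_. rewrite (g_c2 mul one inv Hg). reflexivity.
        -- subst f'. apply Hnot. exists f, (mul y (mul (inv y') x)). split; auto. split.
           ++ exists y, (mul (inv y') x); auto.
           ++ pose proof Hg as Hg'. destruct Hg' as [as_ _]. rewrite as_, <- Ew, Ew', <- as_. rewrite (g_c2 mul one inv Hg). reflexivity.
        -- apply (Hdisj f f' w Hf Hf' Hne Hw); [exists y|exists y']; repeat split; auto.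
Qed.

Theorem mainTheorem13 (G : Type) (mul : G -> G -> G) (one : G) (inv : G -> G)
  (Hgrp : is_group mul one inv) (Hamen : amenable mul)
  (A B : G -> Prop) (alpha beta : R)
  (Ha : 0 < alpha) (Hb : 0 < beta)
  (HdA : banach_density mul A alpha) (HdB : banach_density mul B beta) :
  piecewise_syndetic mul (Z.to_nat (Int_part (1 / (alpha * beta)))) (set_prod mul A B) /\
  exists F : list G, NoDup F /\ INR (length F) <= 1 / (alpha * beta) /\
    thick mul (left_prod mul F (set_prod mul A B)).
Proof.
  set (ab := alpha * beta).
  assert (Hab : 0 < ab) by (unfold ab; nra).
  set (P := fun n => exists F : list G, NoDup F /\ length F = n /\ Dp mul inv A B ab F).
  assert (Hbnd : forall F, NoDup F -> Dp mul inv A B ab F -> INR (length F) <= 1 / ab).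
  { intros F Hnd HD. pose proof (pack mul one inv Hgrp A B ab F Hab Hnd HD).
    unfold Rdiv. rewrite Rmult_1_l. apply (Rmult_le_reg_r ab); auto. rewrite Rinv_l; lra. }
  destruct (max_exists P (Z.to_nat (Int_part (1 / ab)))) as [n [[F [Hnd [Hlen HD]]] Hmax]].
  - exists []. split; [constructor|split; auto]. apply (D_nil mul one inv Hgrp A B alpha beta); auto.
  - intros k [F [Hnd [Hlen HD]]]. subst k. apply to_floor. auto.
  - assert (Hm : forall g, ~ In g F -> ~ Dp mul inv A B ab (g :: F)).
    { intros g Hg HD'. assert (P (S n)).
      { exists (g :: F). split; [constructor; auto|split; auto]. simpl; congruence. }
      specialize (Hmax _ H). lia. }
    assert (Hth : thick mul (left_prod mul F (set_prod mul A B))).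
    { intros H. destruct (thickL mul one inv Hgrp A B ab F Hab Hm H) as [Hs [e [He [Heab Hk]]]].
      destruct (HD Hs e He) as [Om [x Hgood]]. exists x. intros h Hh. eapply Hk; eauto. }
    split.
    + exists F. split; auto. split; auto. apply to_floor. apply Hbnd; auto.
    + exists F. split; auto.
Qed.
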